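(* For any constant $\alpha\ge1$, the class of parity functions is exactly learnable under $\alpha$-log-Lipschitz distributions.
   Context: Parity functions on $\{0,1\}^n$ are $f_I(x)=\left(\sum_{i\in I}x_i\right)\bmod 2$ for $I\subseteq[n]$. A distribution $D$ on $\{0,1\}^n$ is $\alpha$-log-Lipschitz if $|\log D(x)-\log D(x')|\le\log\alpha$ whenever $x,x'$ differ in exactly one bit. Exact learnability under a class of distributions means: there is an algorithm which, for every $n$, every target parity $c$, every distribution $D$ in the class and every $\delta>0$, given a number of i.i.d. examples from $D$ labelled by $c$ that is polynomial in $n$ and $1/\delta$, outputs with probability at least $1-\delta$ a hypothesis $h$ with $h(x)=c(x)$ for all $x\in\{0,1\}^n$. *)

(* Defs.v *)
From HB Require Import structures.
From mathcomp Require Import all_boot all_order all_algebra.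
From mathcomp Require Import all_classical all_reals all_analysis.
Set Implicit Arguments. Unset Strict Implicit. Unset Printing Implicit Defensive.
Import Order.TTheory GRing.Theory Num.Theory.
Local Open Scope ring_scope.

Definition cube (n : nat) : finType := {ffun 'I_n -> bool}.

Definition parity (n : nat) (I : {set 'I_n}) (x : cube n) : bool :=
  odd (\sum_(i in I) (x i : nat))%N.

Definition hamming1 (n : nat) (x x' : cube n) : bool :=
  #|[set i | x i != x' i]| == 1%N.

Definition is_distr (R : realType) (n : nat) (D : cube n -> R) : Prop :=
  (forall x, 0 <= D x) /\ \sum_(x : cube n) D x = 1.

(* Since log 0 = -oo, this forces D to be everywhere positive; we make this
   explicit (mathcomp-analysis' [ln] is 0 on nonpositive arguments). *)
Definition log_lipschitz (R : realType) (alpha : R) (n : nat) (D : cube n -> R) : Prop :=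
  (forall x, 0 < D x) /\
  (forall x x', hamming1 x x' -> `|ln (D x) - ln (D x')| <= ln alpha).

(* A (deterministic) learner: given n, the confidence delta and a sequence of
   labelled examples, outputs a hypothesis on {0,1}^n. *)
Definition learner (R : realType) : Type :=
  forall n : nat, R -> seq (cube n * bool) -> cube n -> bool.

Definition success_prob (R : realType) (A : learner R) (n m : nat) (delta : R)
    (D : cube n -> R) (I : {set 'I_n}) : R :=
  \sum_(s : m.-tuple (cube n))
     (\prod_(i < m) D (tnth s i)) *
     ([forall x : cube n,
         A n delta [seq (y, parity I y) | y <- s] x == parity I x] : bool)%:R.

(* Main.v *)
Require Import Defs.
From HB Require Import structures.
From mathcomp Require Import all_boot all_order all_algebra.
From mathcomp Require Import all_classical all_reals all_analysis.
Import Order.TTheory GRing.Theory Num.Theory.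
Local Open Scope ring_scope.
Set Implicit Arguments. Unset Strict Implicit.

Definition flipb (n : nat) (i : 'I_n) (y : cube n) : cube n :=
  [ffun j => if j == i then ~~ y j else y j].

Lemma flipbK n (i : 'I_n) : involutive (flipb i).
Proof.
move=> y; apply/ffunP => j; rewrite !ffunE; case: eqP => // _; exact: negbK.
Qed.

Lemma parity_flip n (I : {set 'I_n}) i y :
  parity I (flipb i y) = parity I y (+) (i \in I).
Proof.
rewrite /parity; case: (boolP (i \in I)) => iI.
  rewrite (bigD1 i iI) /= [X in _ = odd X (+) _](bigD1 i iI) /= ffunE eqxx !oddD.
  rewrite (eq_bigr (fun j => (y j : nat))); last first.
    by move=> j /andP [_ ji]; rewrite ffunE (negbTE ji).
  by case: (y i); case: (odd (\sum_(j | _) _)).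
rewrite addbF; congr odd; apply: eq_bigr => j jI; rewrite ffunE.
case: eqP => // ji; subst; by rewrite jI in iI.
Qed.

Lemma hamming_flip n (i : 'I_n) y : hamming1 y (flipb i y).
Proof.
rewrite /hamming1.
have -> : [set j | y j != flipb i y j] = [set i].
  apply/setP => j; rewrite !inE ffunE; case: (j =P i) => [->|ne].
    by case: (y i).
  by rewrite eqxx.
by rewrite cards1.
Qed.

Section Prob.
Variable R : realType.

Lemma lip_le (alpha : R) n (D : cube n -> R) : 1 <= alpha ->
  log_lipschitz alpha D -> forall x x', hamming1 x x' -> D x <= alpha * D x'.
Proof.
move=> ha [Dpos Dl] x x' hx.
have apos : alpha \in Num.pos by rewrite posrE (lt_le_trans ltr01 ha).
have := Dl x x' hx => /(le_trans (ler_norm _)).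
rewrite lerBlDr -lnM //; last by rewrite posrE.
rewrite ler_ln // !posrE //; last by rewrite mulr_gt0 // -posrE.
Qed.

Lemma tuple_sum m n (F : cube n -> R) :
  \sum_(s : m.-tuple (cube n)) \prod_(i < m) F (tnth s i) = (\sum_x F x) ^+ m.
Proof.
rewrite -[in RHS](card_ord m) -prodr_const bigA_distr_bigA /=.
rewrite (reindex (fun f : {ffun 'I_m -> cube n} => [tuple f i | i < m])) /=.
  by apply: eq_bigr => f _; apply: eq_bigr => i _; rewrite tnth_mktuple.
exists (fun s : m.-tuple (cube n) => [ffun i => tnth s i]) => s _.
  by apply/ffunP => i; rewrite ffunE tnth_mktuple.
by apply: eq_from_tnth => i; rewrite tnth_mktuple ffunE.
Qed.

Lemma prob_bound (alpha : R) n (D : cube n -> R) (E : pred (cube n)) i :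
  1 <= alpha -> is_distr D -> log_lipschitz alpha D ->
  (forall y, E y -> ~~ E (flipb i y)) ->
  \sum_(y | E y) D y <= alpha / (1 + alpha).
Proof.
move=> ha [D0 D1] hl hE.
set S := \sum_(y | E y) D y.
have hS : S <= alpha * (1 - S).
  rewrite -D1 (bigID E) /= addrC addrK.
  apply: (le_trans (y := \sum_(y | E y) alpha * D (flipb i y))).
    by apply: ler_sum => y _; apply: lip_le => //; apply: hamming_flip.
  rewrite -mulr_sumr ler_wpM2l //; first by rewrite (le_trans ler01).
  rewrite (reindex_inj (inv_inj (flipbK i))) /=.
  rewrite [X in X <= _]big_mkcond [X in _ <= X]big_mkcond /=.
  apply: ler_sum => y _; rewrite flipbK.
  case: (boolP (E (flipb i y))) => h; last by case: (~~ E y).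
  have := hE _ h; rewrite flipbK => ->; exact: lexx.
have ap : 0 < 1 + alpha by rewrite ltr_wpDr // (le_trans ler01).
rewrite ler_pdivlMr //; move: hS; rewrite mulrBr mulr1 mulrDr mulr1 => hS.
  by rewrite mulrC -lerBrDr.
Qed.


Definition learnA : learner R := fun n _ S =>
  parity (odflt (finset.set0 : {set 'I_n}) [pick J : {set 'I_n} | all (fun p => parity J p.1 == p.2) S]).

Lemma key n m (delta : R) (I : {set 'I_n}) (s : m.-tuple (cube n)) :
  1 - (([forall x : cube n,
         learnA delta [seq (y, parity I y) | y <- s] x == parity I x] : bool)%:R : R)
  <= \sum_(J : {set 'I_n} | J != I)
        \prod_(i < m) (parity J (tnth s i) == parity I (tnth s i) : bool)%:R.
Proof.
have ge0 : forall J : {set 'I_n}, (0 : R) <= \prod_(i < m)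
      (parity J (tnth s i) == parity I (tnth s i) : bool)%:R.
  by move=> J; apply: prodr_ge0 => i _; apply: ler0n.
case: (boolP [forall x, _]) => hf.
  by rewrite subrr; apply: sumr_ge0 => J _; apply: ge0.
rewrite subr0 /learnA.
move: hf; rewrite /learnA.
case: pickP => [J HJ | none] /=; last first.
  have := none I; rewrite all_map.
  by move/negbT/negP; case; apply/allP => y _ /=.
move=> hf.
have JI : J != I.
  apply/eqP => JI; move: hf; rewrite JI.
  by move/forallP: (fun x : cube n => eqxx (parity I x)) => -> .
rewrite (bigD1 J JI) /=.
have -> : \prod_(i < m) (parity J (tnth s i) == parity I (tnth s i) : bool)%:R = 1 :> R.
  apply: big1 => i _.
  move: HJ; rewrite all_map => /allP /(_ (tnth s i) (mem_tnth _ _)) /= ->.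
  by [].
by rewrite lerDl; apply: sumr_ge0 => K _; apply: ge0.
Qed.


Lemma bern (x : R) N : 0 <= x -> 1 + N%:R * x <= (1 + x) ^+ N.
Proof.
move=> x0; elim: N => [|N IH]; first by rewrite mul0r addr0 expr0.
rewrite exprS -nat1r mulrDl mul1r.
apply: (le_trans (y := (1 + x) * (1 + N%:R * x))); last first.
  by rewrite ler_wpM2l // addr_ge0.
rewrite mulrDl mul1r mulrDr mulr1 addrA [1 + x]addrC -addrA [x + _]addrC addrA.
by rewrite lerDl mulr_ge0 // mulr_ge0.
Qed.

Lemma qN_le (alpha : R) : 1 <= alpha ->
  (alpha / (1 + alpha)) ^+ (Num.truncn alpha).+1 <= 2^-1.
Proof.
move=> ha.
have a0 : 0 < alpha by rewrite (lt_le_trans ltr01 ha).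
have -> : alpha / (1 + alpha) = (1 + alpha^-1)^-1.
  rewrite -[1 + alpha^-1](mulfK (x := alpha)) ?gt_eqF // mulrDl mul1r mulVf ?gt_eqF //.
  by rewrite invf_div addrC.
have r0 : 0 < 1 + alpha^-1 by rewrite addr_gt0 // invr_gt0.
rewrite exprVn lef_pV2 ?posrE ?exprn_gt0 //.
apply: le_trans (bern _ _); last by rewrite invr_ge0 ltW.
rewrite -[2]/(1 + 1) lerD2l -[X in X <= _](mulfV (x := alpha)) ?gt_eqF //.
rewrite ler_wpM2r ?invr_ge0 ?ltW //.
by have /andP [_ ->] := truncn_itv (ltW a0).
Qed.

End Prob.

Lemma diff_elem n (J I : {set 'I_n}) : J != I -> exists i, (i \in J) != (i \in I).
Proof.
move=> JI; apply/existsP; apply: contraNT JI => /existsPn H.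
apply/eqP/setP => i.
by have := H i; case: (i \in J); case: (i \in I).
Qed.

Lemma final_arith (R : realType) (alpha delta : R) n : 1 <= alpha -> 0 < delta ->
  (2 ^+ n) * (alpha / (1 + alpha)) ^+ ((Num.truncn alpha).+1 * (n + Num.truncn delta^-1))
  <= delta.
Proof.
move=> ha hd.
set q := alpha / (1 + alpha); set t := Num.truncn delta^-1.
have a0 : 0 < alpha by rewrite (lt_le_trans ltr01 ha).
have q0 : 0 <= q by rewrite divr_ge0 // ?addr_ge0 // ltW.
rewrite exprM.
apply: (le_trans (y := 2 ^+ n * (2^-1) ^+ (n + t))).
  rewrite ler_wpM2l ?exprn_ge0 // lerXn2r ?nnegrE ?exprn_ge0 ?invr_ge0 //.
  exact: qN_le.
rewrite exprD mulrA -exprMn mulfV ?pnatr_eq0 // expr1n mul1r.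
have t1 : delta^-1 < t.+1%:R.
  have di : 0 <= delta^-1 by rewrite invr_ge0 ltW.
  by have /andP [_ ->] := truncn_itv di.
rewrite exprVn -[delta]invrK lef_pV2 ?posrE ?exprn_gt0 ?invr_gt0 //.
apply: (le_trans (ltW t1)); rewrite -natrX ler_nat; exact: ltn_expl.
Qed.

Lemma card_sets n : #|{set 'I_n}| = (2 ^ n)%N.
Proof. by rewrite -cardsT -powersetT card_powerset cardsT card_ord. Qed.

Unset Implicit Arguments. Set Strict Implicit.

Theorem theorem5p1 (R : realType) (alpha : R) (halpha : 1 <= alpha) :
  exists (A : learner R) (m : nat -> R -> nat),
    (exists (c : R) (k : nat), forall (n : nat) (delta : R), 0 < delta ->
        (m n delta)%:R <= c * (n%:R + delta^-1) ^+ k) /\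
    forall (n : nat) (I : {set 'I_n}) (D : cube n -> R) (delta : R),
      is_distr D -> log_lipschitz alpha D -> 0 < delta ->
      1 - delta <= success_prob A (m n delta) delta D I.
Proof.
set N := (Num.truncn alpha).+1.
exists (@learnA R), (fun n delta => (N * (n + Num.truncn delta^-1))%N).
split.
  exists N%:R, 1%N => n delta hd.
  rewrite expr1 natrM natrD ler_wpM2l // lerD2l.
  have di : 0 <= delta^-1 by rewrite invr_ge0 ltW.
  by have /andP [-> _] := truncn_itv di.
move=> n I D delta hD hl hd.
set m := (N * (n + Num.truncn delta^-1))%N.
set q := alpha / (1 + alpha).
have tot : \sum_(s : m.-tuple (cube n)) \prod_(i < m) D (tnth s i) = 1.
  by rewrite tuple_sum hD.2 expr1n.
rewrite /success_prob lerBlDr addrC -lerBlDr.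
rewrite -[X in X - _]tot -sumrB.
under eq_bigr do rewrite -{1}[\prod_(i < m) _]mulr1 -mulrBr.
apply: le_trans (final_arith n halpha hd).
have P0 : forall s : m.-tuple (cube n), 0 <= \prod_(i < m) D (tnth s i).
  by move=> s; apply: prodr_ge0 => i _; apply: hD.1.
apply: (le_trans (y := \sum_(s : m.-tuple (cube n)) \prod_(i < m) D (tnth s i) *
   \sum_(J : {set 'I_n} | J != I)
        \prod_(i < m) (parity J (tnth s i) == parity I (tnth s i) : bool)%:R)).
  by apply: ler_sum => s _; apply: ler_wpM2l => //; apply: key.
under eq_bigr do rewrite mulr_sumr.
rewrite exchange_big /=.
have q0 : 0 <= q by rewrite divr_ge0 // ?addr_ge0 // (le_trans ler01).
apply: (le_trans (y := \sum_(J : {set 'I_n} | J != I) q ^+ m)).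
  apply: ler_sum => J JI.
  under eq_bigr do rewrite -big_split /=.
  rewrite (tuple_sum m (fun y => D y * (parity J y == parity I y : bool)%:R)).
  have -> : \sum_x D x * (parity J x == parity I x : bool)%:R =
            \sum_(x | parity J x == parity I x) D x.
    rewrite [in RHS]big_mkcond; apply: eq_bigr => y _.
    by case: (_ == _); rewrite ?mulr1 ?mulr0.
  apply: lerXn2r; rewrite ?nnegrE //.
    by apply: sumr_ge0 => y _; apply: hD.1.
  have [i hi] := diff_elem JI.
  apply: (prob_bound (i := i)) => // y; rewrite !parity_flip.
  by move: hi; case: (i \in J); case: (i \in I); case: (parity J y); case: (parity I y).
apply: (le_trans (y := \sum_(J : {set 'I_n}) q ^+ m)).
  rewrite [X in _ <= X](bigID (fun J => J != I)) /= lerDl.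
  by apply: sumr_ge0 => J _; apply: exprn_ge0.
rewrite sumr_const card_sets -[q ^+ m *+ _]mulr_natl natrX ?mulr1.
exact: lexx.
Qed.
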